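(* Let $q\ge5$ be a prime power and let $\mathcal{C}_\mathscr{C}$ be the $[q+1,q-3,5]_q$ code with parity check matrix whose columns are the vectors $(1,t,t^2,t^3)$, $t\in\mathbb{F}_q$, and $(0,0,0,1)$. Let $W\in\{2,3\}$ and let $\mathcal{V}^{(W)}_a,\mathcal{V}^{(W)}_b$ be two weight-$W$ cosets of $\mathcal{C}_\mathscr{C}$ with distinct weight distributions. Then for $4\le w\le q+1$, $$B_{w}(\mathcal{V}^{(W)}_a)-B_w(\mathcal{V}^{(W)}_b)=-(-1)^w\left[B_3(\mathcal{V}^{(W)}_a)-B_3(\mathcal{V}^{(W)}_b)\right]\binom{q-2}{w-3}.$$
   Context: A coset of a linear code $\mathcal{C}\subseteq\mathbb{F}_q^n$ is a set $\mathbf{v}+\mathcal{C}$; its weight is the minimum Hamming weight of its vectors. $B_w(\mathcal{V})$ is the number of vectors of Hamming weight $w$ in the coset $\mathcal{V}$; the weight distribution of $\mathcal{V}$ is $(B_w(\mathcal{V}))_{w}$. *)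

(* Defs.v *)
From mathcomp Require Import all_boot all_order all_algebra.
Set Implicit Arguments. Unset Strict Implicit. Unset Printing Implicit Defensive.
Import GRing.Theory.
Local Open Scope ring_scope.

(* Coordinates of the length-(q+1) code are indexed by [option F]:
   [Some t] is the column (1,t,t^2,t^3), [None] the column (0,0,0,1). *)
Section Codes.
Variable F : finFieldType.

Definition vec := {ffun option F -> F}.

Definition hwt (v : vec) : nat := #|[set i | v i != 0]|.

Definition pcm (k : 'I_4) (i : option F) : F :=
  match i with
  | Some t => t ^+ k
  | None => (k == 3 :> nat)%:R
  end.

Definition codeCC : {set vec} :=
  [set c : vec | [forall k : 'I_4, \sum_i pcm k i * c i == 0]].

Definition coset (v : vec) : {set vec} := [set v + c | c in codeCC].

Definition set_weight (V : {set vec}) : nat :=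
  \big[minn/#|{: option F}|]_(x in V) hwt x.

Definition Bw (w : nat) (V : {set vec}) : nat := #|[set x in V | hwt x == w]|.

End Codes.

(* Main.v *)
Require Import Defs.
From mathcomp Require Import all_boot all_order all_algebra.
From mathcomp Require Import zify ring lra.
Set Implicit Arguments. Unset Strict Implicit. Unset Printing Implicit Defensive.
Import GRing.Theory.
Local Open Scope ring_scope.

Lemma bin_prod N m j : (j <= m)%N -> (m <= N)%N ->
  ('C(N, j) * 'C(N - j, N - m) = 'C(N, m) * 'C(m, j))%N.
Proof.
move=> Hjm HmN.
have P0 : (0 < j`! * (m - j)`! * (N - m)`!)%N by rewrite !muln_gt0 !fact_gt0.
apply/eqP; rewrite -(eqn_pmul2r P0); apply/eqP.
have e1 := bin_fact (leq_sub2l N Hjm).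
have e2 := bin_fact (leq_trans Hjm HmN).
have e3 := bin_fact Hjm.
have e4 := bin_fact HmN.
have E : (N - j - (N - m) = m - j)%N by lia.
rewrite E in e1.
transitivity (N`!).
  rewrite -e2 -e1; ring.
rewrite -e4 -e3; ring.
Qed.

Lemma tri n (e : nat -> int) : (forall r, (r <= 3)%N -> e r = 0) ->
  (forall s, (4 <= s <= n)%N -> \sum_(r < n.+1) e r * ('C(n - r, n - s))%:Z = 0) ->
  forall s, (s <= n)%N -> e s = 0.
Proof.
move=> H3 Hs s; elim/ltn_ind: s => s IH Hsn.
case: (leqP s 3) => [/H3 //|Hs4].
have := Hs s; rewrite Hs4 Hsn => /(_ isT).
have sI : (s < n.+1)%N by [].
rewrite (bigD1 (Ordinal sI)) //= big1 ?addr0.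
  by rewrite binn mulr1.
move=> [r Hr] /= Hne.
case: (ltngtP r s) => [Hrs|Hrs|Hrs].
- by rewrite IH ?mul0r //; lia.
- by rewrite bin_small ?mulr0 //; lia.
- by move: Hne; rewrite -val_eqE /= Hrs eqxx.
Qed.

Lemma reindex n a b (h : nat -> int) : (a <= b)%N -> (b < n.+1)%N ->
  \sum_(r < n.+1) (if (a <= r <= b)%N then h (r - a)%N else 0) = \sum_(j < (b - a).+1) h j.
Proof.
move=> Hab Hbn.
rewrite -(big_mkord xpredT (fun r => if (a <= r <= b)%N then h (r - a)%N else 0)) (big_cat_nat (n:=a)) //=; last by lia.
rewrite big1_seq ?add0r; last first.
  move=> r /andP [_]; rewrite mem_iota => Hr.
  by case: ifP => // /andP [H1 _]; lia.
rewrite (big_cat_nat (n:=b.+1)) /=; [|lia|lia].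
rewrite [X in _ + X]big1_seq ?addr0; last first.
  move=> r /andP [_]; rewrite mem_iota => Hr.
  by case: ifP => // /andP [_ H1]; lia.
rewrite -{1}(add0n a) big_addn big_mkord.
rewrite subSn //; apply: eq_bigr => [[j Hj]] _ /=.
by rewrite leq_addl /= addnK; have -> : (j + a <= b)%N by lia.
Qed.

Definition fco n r : int := if (r < 3)%N then 0 else (-1) ^+ (r + 1) * ('C(n - 3, r - 3))%:Z.

Lemma alt n s : (4 <= s <= n)%N ->
  \sum_(r < n.+1) fco n r * ('C(n - r, n - s))%:Z = 0.
Proof.
move=> /andP [H4 Hsn].
transitivity (\sum_(r < n.+1) (if (3 <= r <= s)%N then
   ('C(n - 3, s - 3))%:Z * ((-1) ^+ (r - 3) * ('C(s - 3, r - 3))%:Z) else 0)).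
  apply: eq_bigr => [[r Hr]] _ /=; rewrite /fco.
  case: (ltnP r 3) => Hr3 /=; first by rewrite mul0r.
  case: (leqP r s) => Hrs.
    have := bin_prod (N := n - 3) (leq_sub2r 3 Hrs) (leq_sub2r 3 Hsn).
    have -> : (n - 3 - (r - 3) = n - r)%N by lia.
    have -> : (n - 3 - (s - 3) = n - s)%N by lia.
    move=> E; rewrite -mulrA -PoszM E PoszM.
    have -> : (r + 1 = (r - 3) + 4)%N by lia.
    rewrite exprD.
    have -> : (-1 : int) ^+ 4 = 1 by [].
    rewrite mulr1; ring.
  by rewrite (@bin_small (n - r) (n - s)) ?mulr0 //; lia.
rewrite (reindex (fun j => ('C(n - 3, s - 3))%:Z * ((-1) ^+ j * ('C(s - 3, j))%:Z))); last 2 first.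
  - by lia.
  - by lia.
rewrite -mulr_sumr.
have Hm : (s - 3 != 0)%N by lia.
have E : \sum_(j < (s - 3).+1) ((-1) ^+ j * ('C(s - 3, j))%:Z) = (1 - 1 : int) ^+ (s - 3).
  rewrite exprBn; apply: eq_bigr => i _; rewrite !expr1n !mulr1; by rewrite -mulr_natr natz.
by rewrite E subrr expr0n (negbTE Hm) mulr0.
Qed.


Section S.
Variable F : finFieldType.

Definition syn (x : vec F) : {ffun 'I_4 -> F} :=
  [ffun k => \sum_i pcm k i * x i].
Definition supp (x : vec F) : {set option F} := [set i | x i != 0].

Lemma synD x y : syn (x + y) = syn x + syn y.
Proof.
apply/ffunP=> k; rewrite !ffunE -big_split /=; apply: eq_bigr => i _.
by rewrite ffunE mulrDr.
Qed.

Lemma synN x : syn (- x) = - syn x.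
Proof.
apply/ffunP=> k; rewrite !ffunE -sumrN; apply: eq_bigr => i _.
by rewrite ffunE mulrN.
Qed.

Lemma synB x y : syn (x - y) = syn x - syn y.
Proof. by rewrite synD synN. Qed.

Lemma in_codeCC c : (c \in codeCC F) = (syn c == 0).
Proof.
rewrite inE; apply/forallP/eqP => [H|H k].
  by apply/ffunP=> k; rewrite ffunE ffunE; apply/eqP.
by move/ffunP: H => /(_ k); rewrite !ffunE => ->.
Qed.

Lemma coset_syn v x : (x \in coset v) = (syn x == syn v).
Proof.
apply/imsetP/eqP => [[c Hc ->]|H].
  by move: Hc; rewrite in_codeCC synD => /eqP ->; rewrite addr0.
exists (x - v); last by rewrite addrC subrK.
by rewrite in_codeCC synB H subrr.
Qed.

Lemma code_poly c (p : {poly F}) : syn c = 0 -> (size p <= 4)%N ->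
  \sum_i (if i is Some t then p.[t] else p`_3) * c i = 0.
Proof.
move=> Hc Hp.
transitivity (\sum_i \sum_(k < 4) p`_k * pcm k i * c i).
  apply: eq_bigr => i _; rewrite -mulr_suml; congr (_ * _).
  case: i => [t|]; first by rewrite (horner_coef_wide _ Hp).
  by rewrite !big_ord_recr big_ord0 /= !mulr0 !add0r mulr1.
rewrite exchange_big /= big1 // => k _.
under eq_bigr do rewrite -mulrA.
by rewrite -mulr_sumr; move/ffunP: Hc => /(_ k); rewrite !ffunE => ->; rewrite mulr0.
Qed.

Lemma card_supp_split (S : {set option F}) :
  #|S| = ((None \in S) + #|[set t | Some t \in S]|)%N.
Proof.
rewrite (cardsD1 None); congr (_ + _)%N.
have -> : S :\ None = Some @: [set t | Some t \in S].
  apply/setP => -[t|]; rewrite !inE /=.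
    apply/idP/imsetP => [H|[u]]; first by exists t; rewrite ?inE.
    by rewrite inE => Hu [->].
  by apply/esym/imsetP => -[u].
by rewrite card_imset //; move=> ? ? [].
Qed.

Lemma dist c : syn c = 0 -> (#|supp c| <= 4)%N -> c = 0.
Proof.
move=> Hc Hs.
set T' := [set t | Some t \in supp c].
have cardS := card_supp_split (supp c); rewrite -/T' in cardS.
have fin : forall t0, c (Some t0) = 0.
  move=> t0; apply/eqP/negPn/negP => Ht0.
  have t0T : t0 \in T' by rewrite !inE.
  have cT := cardsD1 t0 T'; rewrite t0T in cT.
  set p := \prod_(s <- enum (T' :\ t0)) ('X - s%:P).
  have sp : size p = (#|T' :\ t0|.+1)%N by rewrite size_prod_XsubC -cardE.
  have := @code_poly c p Hc.
  rewrite sp; have -> : (#|T' :\ t0|.+1 <= 4)%N by lia.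
  move=> /(_ isT); rewrite (bigD1 (Some t0)) //= big1 ?addr0.
    move=> /eqP; rewrite mulf_eq0 (negbTE Ht0) orbF.
    by rewrite -rootE root_prod_XsubC mem_enum !inE eqxx.
  move=> i Hi; case: (eqVneq (c i) 0) => [->|ci]; first by rewrite mulr0.
  case: i Hi ci => [s|] Hs' cs.
    have : root p s.
      rewrite root_prod_XsubC mem_enum !inE cs andbT.
      by apply: contra Hs' => /eqP ->.
    by move/rootP => ->; rewrite mul0r.
  have NS : None \in supp c by rewrite inE.
  rewrite NS in cardS.
  by rewrite nth_default ?mul0r // sp; lia.
have cN : c None = 0.
  move/ffunP: Hc => /(_ 3%:R); rewrite !ffunE (bigD1 None) //= big1 ?addr0.
    by rewrite mul1r.
  by move=> [t|] // _; rewrite fin mulr0.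
by apply/ffunP => -[t|]; rewrite ffunE ?fin ?cN.
Qed.


Lemma supp_subD x y (S : {set option F}) : supp x \subset S -> supp y \subset S -> supp (x + y) \subset S.
Proof.
move=> /subsetP Hx /subsetP Hy; apply/subsetP => i; rewrite inE ffunE => H.
case: (eqVneq (x i) 0) => [xi|xi]; last by apply: Hx; rewrite inE.
by apply: Hy; rewrite inE; move: H; rewrite xi add0r.
Qed.

Lemma suppN x : supp (- x) = supp x.
Proof. by apply/setP => i; rewrite !inE ffunE oppr_eq0. Qed.

Lemma surj (S : {set option F}) (sg : {ffun 'I_4 -> F}) : (4 <= #|S|)%N ->
  exists y, supp y \subset S /\ syn y = sg.
Proof.
move=> HS.
pose e (j : 'I_4) := nth None (enum S) j.
have sz : size (enum S) = #|S| by rewrite cardE.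
have einj : injective e.
  move=> [j Hj] [k Hk] /eqP; rewrite /e /= nth_uniq ?enum_uniq ?sz //.
  - by move/eqP => E; apply: val_inj.
  - by lia.
  - by lia.
have eS : forall j, e j \in S.
  move=> [j Hj]; rewrite -mem_enum /e mem_nth //= sz; lia.
pose X (u : {ffun 'I_4 -> F}) : vec F := [ffun i => \sum_(j < 4) (e j == i)%:R * u j].
have XB : forall u u', X (u - u') = X u - X u'.
  move=> u u'; apply/ffunP => i; rewrite !ffunE -sumrB; apply: eq_bigr => j _.
  by rewrite !ffunE mulrBr.
have Xe : forall u j, X u (e j) = u j.
  move=> u j; rewrite ffunE (bigD1 j) //= eqxx mul1r big1 ?addr0 //.
  move=> k Hk; case: (eqVneq (e k) (e j)) => [/einj E|_]; last by rewrite mul0r.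
  by rewrite E eqxx in Hk.
have suppX : forall u, supp (X u) \subset [set e j | j : 'I_4].
  move=> u; apply/subsetP => i; rewrite inE; apply: contraR => Hi.
  rewrite ffunE big1 // => j _; case: (eqVneq (e j) i) => [E|]; last by rewrite mul0r.
  by case/negP: Hi; rewrite -E; apply/imsetP; exists j.
have cim : (#|[set e j | j : 'I_4]| <= 4)%N.
  by apply: leq_trans (leq_imset_card _ _) _; rewrite card_ord.
have inj : injective (fun u => syn (X u)).
  move=> u u' /= E.
  have H0 : X (u - u') = 0.
    apply: dist; first by rewrite XB synB E subrr.
    by apply: leq_trans (subset_leq_card (suppX _)) cim.
  apply/eqP; rewrite -subr_eq0; apply/eqP/ffunP => j.
  by rewrite -Xe H0 !ffunE.
have [g gK Kg] := injF_bij inj.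
exists (X (g sg)); split; last exact: Kg.
apply: subset_trans (suppX _) _; apply/subsetP => i /imsetP [j _ ->]; exact: eS.
Qed.


Lemma A_le va vb (S : {set option F}) : (4 <= #|S|)%N ->
  (#|[set x in coset va | supp x \subset S]| <= #|[set x in coset vb | supp x \subset S]|)%N.
Proof.
move=> HS; have [y [Hy Ey]] := @surj S (syn vb - syn va) HS.
rewrite -(card_imset _ (addIr y)); apply: subset_leq_card.
apply/subsetP => z /imsetP [x]; rewrite !inE => /andP [Hx Hs] ->.
rewrite coset_syn synD Ey; move: Hx; rewrite coset_syn => /eqP ->.
by rewrite addrC subrK eqxx supp_subD.
Qed.

Lemma A_eq va vb (S : {set option F}) : (4 <= #|S|)%N ->
  #|[set x in coset va | supp x \subset S]| = #|[set x in coset vb | supp x \subset S]|.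
Proof. by move=> HS; apply/eqP; rewrite eqn_leq !A_le. Qed.

End S.

Lemma sum_card (T : finType) (P Q : pred T) :
  (\sum_(x | P x) (Q x : nat))%N = #|[set x | P x && Q x]|.
Proof.
rewrite -sum1_card big_mkcond /= [RHS]big_mkcond /=; apply: eq_bigr => x _.
by rewrite inE; case: (P x); case: (Q x).
Qed.

Lemma card_supersets (T : finType) (R : {set T}) s : (s <= #|T|)%N ->
  #|[set S : {set T} | (#|S| == s) && (R \subset S)]| = 'C(#|T| - #|R|, #|T| - s).
Proof.
move=> Hs.
rewrite -(card_imset _ (@setC_inj T)).
have -> : [set ~: S | S in [set S : {set T} | (#|S| == s) && (R \subset S)]] =
          [set A : {set T} | A \subset ~: R & #|A| == (#|T| - s)%N].
  apply/setP => A; rewrite !inE; apply/imsetP/idP => [[S]|/andP [H1 H2]].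
    rewrite inE => /andP [/eqP H1 H2] ->.
    by rewrite setCS H2 -(cardsC S) H1 addKn eqxx.
  exists (~: A); last by rewrite setCK.
  rewrite inE -setCS setCK H1 andbT.
  have := cardsC A; have := max_card (mem A); move/eqP: H2; lia.
by rewrite cards_draws -(cardsC R) addKn.
Qed.

Section S2.
Variable F : finFieldType.
Local Notation n := #|{: option F}|.

Lemma dc (V : {set vec F}) s : (s <= n)%N ->
  (\sum_(S : {set option F} | #|S| == s) #|[set x in V | supp x \subset S]|)%N
  = (\sum_(x in V) 'C(n - hwt x, n - s))%N.
Proof.
move=> Hs.
transitivity (\sum_(S : {set option F} | #|S| == s) \sum_(x in V) ((supp x \subset S) : nat))%N.
  by apply: eq_bigr => S _; rewrite sum_card.
rewrite exchange_big; apply: eq_bigr => x _; rewrite sum_card.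
by rewrite card_supersets.
Qed.

Lemma group (V : {set vec F}) (f : nat -> nat) :
  (\sum_(x in V) f (hwt x))%N = (\sum_(r < n.+1) Bw r V * f r)%N.
Proof.
rewrite (partition_big (fun x => (inord (hwt x) : 'I_n.+1)) xpredT) //=.
apply: eq_bigr => r _.
transitivity (\sum_(x in [set x in V | hwt x == r]) f r)%N.
  apply: eq_big => x; rewrite ?inE.
    case: (x \in V) => //=.
    apply/eqP/eqP => [<-|E]; last by apply: val_inj; rewrite /= -E inordK // ltnS max_card.
    by rewrite inordK // ltnS max_card.
  move=> /andP [_ /eqP E]; rewrite -E inordK // ltnS max_card //.
by rewrite sum_nat_const.
Qed.

Lemma main_eq (va vb : vec F) s : (4 <= s <= n)%N ->
  (\sum_(r < n.+1) Bw r (coset va) * 'C(n - r, n - s))%N =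
  (\sum_(r < n.+1) Bw r (coset vb) * 'C(n - r, n - s))%N.
Proof.
move=> /andP [H4 Hs].
rewrite -!(group _ (fun r => 'C(n - r, n - s))) -!dc //.
apply: eq_bigr => S /eqP HS; apply: A_eq; by rewrite HS.
Qed.

Lemma sw_le (V : {set vec F}) x : x \in V -> (set_weight V <= hwt x)%N.
Proof.
move=> Hx; rewrite /set_weight -big_filter.
have : x \in [seq i <- index_enum (vec F) | i \in V] by rewrite mem_filter Hx mem_index_enum.
elim: [seq _ <- _ | _] => //= y s IH; rewrite inE big_cons => /orP [/eqP ->|/IH H].
  exact: geq_minl.
exact: leq_trans (geq_minr _ _) H.
Qed.

Lemma sw_att (V : {set vec F}) : (set_weight V < n)%N ->
  exists2 x, x \in V & hwt x = set_weight V.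
Proof.
rewrite /set_weight.
apply: (big_ind (fun m => (m < n)%N -> exists2 x, x \in V & hwt x = m)).
- by rewrite ltnn.
- move=> a b Ha Hb; case: (leqP a b) => Hab.
    exact: Ha.
  exact: Hb.
- move=> x Hx _.
by exists x.
Qed.

Lemma B_low (V : {set vec F}) r : (r < set_weight V)%N -> Bw r V = 0%N.
Proof.
move=> Hr; apply: eq_card0 => x; rewrite !inE; apply/negP => /andP [Hx /eqP Hw].
by have := sw_le Hx; rewrite Hw leqNgt Hr.
Qed.

Lemma B2 (v : vec F) : (2 < n)%N -> set_weight (coset v) = 2%N -> Bw 2 (coset v) = 1%N.
Proof.
move=> Hn Hw.
have [x0 Hx0 Hw0] : exists2 x, x \in coset v & hwt x = set_weight (coset v).
  by apply: sw_att; rewrite Hw.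
rewrite /Bw (_ : [set x in coset v | hwt x == 2] = [set x0]) ?cards1 //.
apply/setP => y; rewrite !inE; apply/andP/eqP => [[Hy /eqP Hwy]|->].
  apply: subr0_eq; apply: dist.
    by rewrite synB; move: Hy Hx0; rewrite !coset_syn => /eqP -> /eqP ->; rewrite subrr.
  have Hsub : supp (y - x0) \subset supp y :|: supp x0.
    by apply: supp_subD; rewrite ?suppN ?subsetUl ?subsetUr.
  apply: leq_trans (subset_leq_card Hsub) _; rewrite cardsU.
  move: Hwy Hw0; rewrite Hw /hwt /supp => -> ->; lia.
by rewrite Hx0 Hw0 Hw.
Qed.
End S2.

Theorem theorem5p1 (F : finFieldType) (W : nat) (va vb : vec F) :
  (5 <= #|F|)%N ->
  (W = 2 \/ W = 3)%N ->
  set_weight (coset va) = W ->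
  set_weight (coset vb) = W ->
  (exists w : nat, Bw w (coset va) <> Bw w (coset vb)) ->
  forall w : nat, (4 <= w <= #|F| + 1)%N ->
    (Bw w (coset va))%:Z - (Bw w (coset vb))%:Z =
    - (-1) ^+ w * ((Bw 3 (coset va))%:Z - (Bw 3 (coset vb))%:Z)
      * ('C(#|F| - 2, w - 3))%:Z.
Proof.
move=> Hq HW Ha Hb _ w Hw.
have cn : #|{: option F}| = (#|F| + 1)%N by rewrite card_option addn1.
set n := #|{: option F}| in cn.
pose d r := (Bw r (coset va))%:Z - (Bw r (coset vb))%:Z.
pose e r := d r - fco n r * d 3%N.
have low : forall r, (r < 3)%N -> d r = 0.
  move=> r Hr; rewrite /d.
  case: (ltnP r 2) => Hr2.
    by rewrite !B_low ?Ha ?Hb //; case: HW => ->; lia.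
  have -> : r = 2%N by lia.
  case: HW => HW; rewrite HW in Ha Hb.
    rewrite !B2 // ?Ha ?Hb // card_option; exact: leq_trans (_ : 3 <= 5)%N (leq_trans Hq (leqnSn _)).
  by rewrite !B_low ?subrr //; rewrite ?Ha ?Hb.
have He := @tri n e.
have H0 : e w = 0.
  apply: He; last by rewrite cn; lia.
    move=> r Hr; rewrite /e.
    case: (ltnP r 3) => Hr3.
      by rewrite low // /fco Hr3 mul0r subrr.
    have -> : r = 3%N by lia.
    by rewrite /fco /= subnn bin0 mul1r subrr.
  move=> s Hs.
  have Es := alt Hs.
  have Ms := main_eq va vb Hs.
  rewrite /e.
  under eq_bigr do rewrite mulrBl (mulrC (fco n _)) -mulrA.
  rewrite sumrB -mulr_sumr Es mulr0 subr0.
  rewrite /d; under eq_bigr do rewrite mulrBl.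
  rewrite sumrB; apply/eqP; rewrite subr_eq0; apply/eqP.
  move/(congr1 (fun k : nat => k%:Z)): Ms.
  rewrite -!natz !natr_sum => Ms.
  transitivity (\sum_(i < n.+1) ((Bw i (coset va) * 'C(n - i, n - s))%N)%:R : int).
    by apply: eq_bigr => i _; rewrite natrM !natz.
  by rewrite Ms; apply: eq_bigr => i _; rewrite natrM !natz.
have Ew : d w = fco n w * d 3%N by apply/eqP; rewrite -subr_eq0; apply/eqP.
move: Ew; rewrite /d => ->.
rewrite /fco; have -> : (w < 3)%N = false by lia.
have -> : (n - 3 = #|F| - 2)%N by rewrite cn; lia.
rewrite addn1 exprS /d; ring.
Qed.
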